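(* Let $\psi$ be a convex function on a convex subset of a real vector space, with (sub)gradient $\nabla\psi$, which is $\eta$-exp-concave for some $\eta>0$ and satisfies $0\le\psi\le m$. Then for all $x,y$ in its domain, \[ \psi(x)-\psi(y)-\langle\nabla\psi|_y,x-y\rangle\ \ge\ \frac{|\psi(x)-\psi(y)|^2}{2m\vee(4/\eta)}. \]
   Context: $\psi$ is $\eta$-exp-concave if $e^{-\eta\psi}$ is concave. $a\vee b=\max(a,b)$. *)

(* Defs.v *)
From HB Require Import structures.
From mathcomp Require Import all_boot all_order all_algebra.
From mathcomp Require Import all_classical all_reals.
From mathcomp Require Import sequences exp.
Set Implicit Arguments. Unset Strict Implicit. Unset Printing Implicit Defensive.
Import Order.TTheory GRing.Theory Num.Theory.
Local Open Scope ring_scope.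
Local Open Scope classical_set_scope.

Definition convex_dom (R : realType) (V : lmodType R) (D : set V) : Prop :=
  forall x y t, D x -> D y -> 0 <= t -> t <= 1 -> D (t *: x + (1 - t) *: y).

Definition convex_on (R : realType) (V : lmodType R) (D : set V) (f : V -> R) : Prop :=
  forall x y t, D x -> D y -> 0 <= t -> t <= 1 ->
    f (t *: x + (1 - t) *: y) <= t * f x + (1 - t) * f y.

Definition concave_on (R : realType) (V : lmodType R) (D : set V) (f : V -> R) : Prop :=
  forall x y t, D x -> D y -> 0 <= t -> t <= 1 ->
    t * f x + (1 - t) * f y <= f (t *: x + (1 - t) *: y).

Definition exp_concave (R : realType) (V : lmodType R) (D : set V) (eta : R) (psi : V -> R) : Prop :=
  concave_on D (fun x => expR (- (eta * psi x))).

Definition linear_functional (R : realType) (V : lmodType R) (l : V -> R) : Prop :=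
  forall a u v, l (a *: u + v) = a * l u + l v.

Definition subgradient (R : realType) (V : lmodType R) (D : set V) (psi : V -> R)
    (g : V -> V -> R) : Prop :=
  forall y, D y -> linear_functional (g y) /\ forall x, D x -> psi y + g y (x - y) <= psi x.

(* Main.v *)
Require Import Defs.
From HB Require Import structures.
From mathcomp Require Import all_boot all_order all_algebra.
From mathcomp Require Import all_classical all_reals.
From mathcomp Require Import sequences exp.
From mathcomp Require Import ring lra.
Import Order.TTheory GRing.Theory Num.Theory.
Local Open Scope ring_scope.
Local Open Scope classical_set_scope.
Lemma f_bound {R : realType} {u L : R} : u <= L ->
  u ^+ 2 <= (u - 1 + expR (- u)) * Num.max (2 * L) 4.
Proof.
move=> uL.
have Me : expR (- u) = expR (- (u / 2)) * expR (- (u / 2)).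
  by rewrite -expRD; congr expR; field.
have M4 : 4 <= Num.max (2 * L) 4 by rewrite le_max lexx orbT.
have M2 : 2 * L <= Num.max (2 * L) 4 by rewrite le_max lexx.
have ep := expR_gt0 (- u).
case: (lerP u 2) => hu.
- have E : 1 - u / 2 <= expR (- (u / 2)) by have := expR_ge1Dx (- (u / 2)).
  have E2 : (1 - u / 2) ^+ 2 <= expR (- u).
    rewrite Me; apply: ler_pM; lra.
  have F : u ^+ 2 <= (u - 1 + expR (- u)) * 4 by nra.
  apply: (le_trans F); apply: ler_wpM2l => //; nra.
- nra.
Qed.

Lemma small_t (R : realType) (A B K t0 : R) : 0 < t0 -> 0 <= K ->
  (forall t, 0 < t -> t <= t0 -> A <= B + K * t) -> A <= B.
Proof.
move=> t0p Kp H; rewrite leNgt; apply/negP => BA.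
pose t := Num.min t0 ((A - B) / (K + 1)).
have tp : 0 < t by rewrite lt_min t0p /= divr_gt0 //; lra.
have tle : t <= t0 by rewrite ge_min lexx.
have tle2 : t <= (A - B) / (K + 1) by rewrite ge_min lexx orbT.
have := H t tp tle.
have : t * (K + 1) <= A - B by rewrite -ler_pdivlMr //; lra.
nra.
Qed.

Theorem proposition4 (R : realType) (V : lmodType R) (D : set V)
  (psi : V -> R) (g : V -> V -> R) (eta m : R) :
  convex_dom D -> convex_on D psi -> subgradient D psi g ->
  0 < eta -> exp_concave D eta psi ->
  (forall x, D x -> 0 <= psi x /\ psi x <= m) ->
  forall x y, D x -> D y ->
    (psi x - psi y) ^+ 2 / Num.max (2 * m) (4 / eta)
      <= psi x - psi y - g y (x - y).
Proof.
move=> cD cvx sg etap ec bnd x y Dx Dy.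
have [lin sub] := sg y Dy.
have l0 : g y 0 = 0.
  have := lin 1 0 0; rewrite scale1r addr0 mul1r; lra.
have lsc : forall a u, g y (a *: u) = a * g y u.
  by move=> a u; have := lin a u 0; rewrite !addr0 l0 addr0.
set c := g y (x - y).
set hx := expR (- (eta * psi x)).
set hy := expR (- (eta * psi y)).
have hyp : 0 < hy by apply: expR_gt0.
have key : hx - hy <= hy * (- (eta * c)).
  pose w := (eta * c) ^+ 2.
  have wp : 0 <= w by apply: sqr_ge0.
  apply: (@small_t _ _ _ (2 * hy * w) (1 / (4 * w + 1))).
  - by apply: divr_gt0 => //; lra.
  - nra.
  move=> t tp tle.
  have t1 : t * (4 * w + 1) <= 1 by rewrite -ler_pdivlMr //; lra.
  have t01 : t <= 1 by nra.
  pose z := t *: x + (1 - t) *: y.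
  have Dz : D z by apply: cD => //; lra.
  have zy : z - y = t *: (x - y).
    by rewrite /z scalerBl scale1r scalerBr [LHS]addrC addrCA addKr.
  have pz : psi y + t * c <= psi z.
    by have := sub z Dz; rewrite zy lsc.
  have cc := ec x y t Dx Dy (ltW tp) t01.
  rewrite /= -/z in cc.
  set s := eta * t * c.
  have s2 : s ^+ 2 = w * t ^+ 2 by rewrite /s /w; ring.
  have s2' : s ^+ 2 <= w * t by rewrite s2; nra.
  have hz : expR (- (eta * psi z)) <= hy * expR (- s).
    rewrite /hy -expRD ler_expR /s; nra.
  have E1 : expR (- s) * (1 + s) <= 1.
    have := expR_ge1Dx s; have := expR_gt0 (- s).
    have : expR (- s) * expR s = 1 by rewrite -expRD addNr expR0.
    nra.
  have E2 : expR (- s) <= 1 - s + 2 * s ^+ 2.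
    have Es := expR_gt0 (- s).
    have s1 : -1/2 <= s by nra.
    nra.
  have : t * (hx - hy) <= t * (hy * - (eta * c) + 2 * hy * w * t).
    have : t * (hx - hy) <= hy * (expR (- s) - 1) by move: cc hz; rewrite -/hx -/hy; nra.
    have hs : hy * s = t * (hy * (eta * c)) by rewrite /s; ring.
    have : hy * (expR (- s) - 1) <= hy * (- s + 2 * s ^+ 2) by rewrite ler_pM2l //; lra.
    rewrite s2; nra.
  by rewrite ler_pM2l.
pose d := psi x - psi y.
pose u := eta * d.
have hxe : hx = hy * expR (- u) by rewrite /hx /hy -expRD /u /d; congr expR; ring.
have Eu : expR (- u) - 1 <= - (eta * c).
  by move: key; rewrite hxe => key; rewrite -(ler_pM2l hyp); nra.
have [bx1 bx2] := bnd x Dx.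
have [py1 py2] := bnd y Dy.
have uL : u <= eta * m by rewrite /u /d; nra.
have fb := f_bound uL.
have f0 : 0 <= u - 1 + expR (- u) by have := expR_ge1Dx (- u); lra.
set M := Num.max (2 * m) (4 / eta).
have M1 : 2 * m <= M by rewrite le_max lexx.
have M2 : 4 / eta <= M by rewrite le_max lexx orbT.
have Mp : 0 < M by apply: lt_le_trans M2; apply: divr_gt0.
have XM : Num.max (2 * (eta * m)) 4 <= eta * M.
  rewrite ge_max; apply/andP; split.
  - nra.
  - have e4 : eta * (4 / eta) = 4 by rewrite mulrCA divff ?mulr1 // gt_eqF.
    nra.
rewrite -/d ler_pdivrMr //.
have : u ^+ 2 <= eta * (d - c) * (eta * M).
  apply: (le_trans fb); apply: ler_pM => //.
  - by rewrite le_max; apply/orP; right.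
  - have hu : u = eta * d by []. nra.
have hu : u = eta * d by [].
rewrite hu => H.
have : eta ^+ 2 * (d ^+ 2) <= eta ^+ 2 * ((d - c) * M) by nra.
by rewrite ler_pM2l // exprn_gt0.
Qed.
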